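(* Let $I$ be a finite set. The space $\mathcal{P}(\mathbf{k}\mathbf{SC})[I]$ of primitive elements of $\mathbf{k}\mathbf{SC}[I]$ has a basis consisting of the elements \[\omega^{\Gamma}=\sum_{\Phi\le\Gamma}\mu(\Phi,\Gamma)\,\Phi\] for connected $\Gamma\in\mathbf{SC}[I]$.
   Context: $\mathbf{k}$ is a field of characteristic $0$. A simplicial complex on a finite ground set $I$ is a downward closed collection $\Gamma\subseteq2^I$. $\mathbf{SC}[I]$ is the set of simplicial complexes on $I$, ordered by $\Phi\le\Gamma$ iff every $X\in\Phi$ lies in $\Gamma$; $\mu$ is the Möbius function of this poset; $\mathbf{k}\mathbf{SC}[I]$ is the vector space with basis $\mathbf{SC}[I]$. Multiplication: for $\Gamma_1$ on $S$, $\Gamma_2$ on $T$ disjoint, $m_{S,T}(\Gamma_1,\Gamma_2)=\Gamma_1\sqcup\Gamma_2=\{A\subseteq S\sqcup T:A\in\Gamma_1\text{ or }A\in\Gamma_2\}$. Comultiplication: $\Delta_{S,T}(\Gamma)=\Gamma|S\otimes\Gamma|T$ with $\Gamma|S=\Gamma\cap2^S$. An element $p\in\mathbf{k}\mathbf{SC}[I]$ is primitive if $\Delta_{S,T}(p)=0$ for all $I=S\sqcup T$ with $S,T$ nonempty. $\Gamma\in\mathbf{SC}[I]$ is connected if it cannot be written as $\Gamma_1\sqcup\Gamma_2$ with $\Gamma_1\in\mathbf{SC}[S]$, $\Gamma_2\in\mathbf{SC}[T]$, $I=S\sqcup T$, $S,T$ nonempty. *)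

(* Defs.v *)
From HB Require Import structures.
From mathcomp Require Import all_boot all_order all_algebra.
Set Implicit Arguments. Unset Strict Implicit. Unset Printing Implicit Defensive.
Import GRing.Theory.
Local Open Scope ring_scope.

(* Defined by recursion with fuel; fuel #|T| suffices since
   strict chains have length < #|T|. *)
Fixpoint mobius_rec (R : pzRingType) (T : finType) (le : rel T) (n : nat)
    (x y : T) : R :=
  match n with
  | 0 => (x == y)%:R
  | n'.+1 =>
      if x == y then 1
      else if le x y then
        - \sum_(z : T | le x z && (z != y) && le z y) mobius_rec R le n' x z
      else 0
  end.

Definition mobius (R : pzRingType) (T : finType) (le : rel T) (x y : T) : R :=
  mobius_rec R le #|T| x y.

Definition is_sc (I : finType) (G : {set {set I}}) : bool :=
  [forall X in G, forall Y : {set I}, (Y \subset X) ==> (Y \in G)].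

Definition SC (I : finType) := {G : {set {set I}} | is_sc G}.

Definition sc_le (I : finType) : rel (SC I) :=
  fun P G => (val P \subset val G).

Definition sc_mu (k : pzRingType) (I : finType) (P G : SC I) : k :=
  mobius k (@sc_le I) P G.

Definition restr (I : finType) (G : {set {set I}}) (S : {set I}) :
  {set {set I}} := [set X in G | X \subset S].

Definition on_ground (I : finType) (G : {set {set I}}) (S : {set I}) : bool :=
  [forall X in G, X \subset S].

(* the vector space kSC[I], with basis SC[I] (coordinates) *)
Notation kSC k I := {ffun SC I -> k}%type.

(* p is primitive: for every decomposition I = S ⊔ T with S, T nonempty,
   Delta_{S,T}(p) = sum_G p(G) (G|S ⊗ G|T) = 0 in kSC[S] ⊗ kSC[T];
   written in the basis of pairs (A, B) of the tensor product. *)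
Definition primitive (k : pzRingType) (I : finType) (p : kSC k I) : Prop :=
  forall S : {set I}, S != set0 -> ~: S != set0 ->
  forall A B : {set {set I}},
    \sum_(G : SC I | (restr (val G) S == A) && (restr (val G) (~: S) == B))
      p G = 0.

Definition connected (I : finType) (G : SC I) : bool :=
  ~~ [exists S : {set I}, exists G1 : SC I, exists G2 : SC I,
       [&& S != set0, ~: S != set0, on_ground (val G1) S,
           on_ground (val G2) (~: S) & val G == val G1 :|: val G2]].

Definition omega (k : pzRingType) (I : finType) (G : SC I) : kSC k I :=
  [ffun P => if sc_le P G then sc_mu k P G else 0].

(* Main.v *)
Require Import Defs.
From HB Require Import structures.
From mathcomp Require Import all_boot all_order all_algebra.
From mathcomp Require Import zify.
Import GRing.Theory.
Local Open Scope ring_scope.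
Set Implicit Arguments. Unset Strict Implicit. Unset Printing Implicit Defensive.

Lemma sc_down (I : finType) (P : SC I) (X Y : {set I}) :
  X \in val P -> Y \subset X -> Y \in val P.
Proof.
move=> XP YX; have /forall_inP H := valP P.
by move/forallP: (H X XP) => /(_ Y) /implyP; apply.
Qed.

Lemma is_scP (I : finType) (G : {set {set I}}) :
  (forall X Y : {set I}, X \in G -> Y \subset X -> Y \in G) -> is_sc G.
Proof.
move=> H; apply/forall_inP => X XG; apply/forallP => Y; apply/implyP; exact: H.
Qed.

Definition condn (I : finType) (a b : {set {set I}}) : bool :=
  [forall X in b :\: a, forall Y : {set I}, (Y \proper X) ==> (Y \in a)].

Lemma condnP (I : finType) (a b : {set {set I}}) :
  reflect (forall X Y : {set I}, X \in b -> X \notin a -> Y \proper X -> Y \in a) (condn a b).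
Proof.
apply: (iffP forall_inP) => H.
  move=> X Y Xb Xa YX; have : X \in b :\: a by rewrite inE Xa.
  by move/H/forallP/(_ Y)/implyP; apply.
move=> X; rewrite inE => /andP [Xa Xb]; apply/forallP => Y; apply/implyP; exact: H.
Qed.

Definition nu (k : pzRingType) (I : finType) (P G : SC I) : k :=
  if (val P \subset val G) && condn (val P) (val G)
  then (-1) ^+ #|val G :\: val P| else 0.

Definition tog (I : finType) (X : {set I}) (P : SC I) : SC I :=
  insubd P (if X \in val P then val P :\ X else X |: val P).

Lemma tog_add (I : finType) (X : {set I}) (P : SC I) :
  X \notin val P -> is_sc (X |: val P) -> val (tog X P) = X |: val P.
Proof. by move=> XP sc; rewrite /tog val_insubd (negbTE XP) sc. Qed.

Lemma tog_rem (I : finType) (X : {set I}) (P : SC I) :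
  X \in val P -> is_sc (val P :\ X) -> val (tog X P) = val P :\ X.
Proof. by move=> XP sc; rewrite /tog val_insubd XP sc. Qed.

Lemma tog_add_fix (I : finType) (X : {set I}) (P : SC I) :
  X \notin val P -> ~~ is_sc (X |: val P) -> tog X P = P.
Proof. by move=> XP sc; apply: val_inj; rewrite /tog val_insubd (negbTE XP) (negbTE sc). Qed.

Lemma tog_rem_fix (I : finType) (X : {set I}) (P : SC I) :
  X \in val P -> ~~ is_sc (val P :\ X) -> tog X P = P.
Proof. by move=> XP sc; apply: val_inj; rewrite /tog val_insubd XP (negbTE sc). Qed.

Lemma tog_inv (I : finType) (X : {set I}) : involutive (tog X).
Proof.
move=> P; case XP: (X \in val P).
  case sc: (is_sc (val P :\ X)); last by rewrite !tog_rem_fix ?sc.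
  have E := tog_rem XP sc.
  apply: val_inj; rewrite tog_add E ?setD11 //.
    by rewrite setD1K.
  by rewrite setD1K // (valP P).
case sc: (is_sc (X |: val P)); last by rewrite !tog_add_fix ?XP ?sc.
have E := tog_add (negbT XP) sc.
apply: val_inj; rewrite tog_rem E ?setU11 //.
  by rewrite setU1K ?XP.
by rewrite setU1K ?XP // (valP P).
Qed.

Lemma inv_sum0 (k : fieldType) (Hchar : [pchar k] =i pred0) (T : finType)
  (h : T -> T) (D : pred T) (f : T -> k) :
  involutive h -> (forall x, D (h x) = D x) ->
  (forall x, D x -> f (h x) = - f x) -> \sum_(x | D x) f x = 0.
Proof.
move=> hK HD Hf.
have E : \sum_(x | D x) f x = - \sum_(x | D x) f x.
  rewrite {1}(reindex_inj (inv_inj hK)) /= -sumrN.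
  apply: eq_big => [x|x]; first exact: HD.
  by rewrite HD => Dx; rewrite Hf.
have : (\sum_(x | D x) f x) * 2%:R = 0.
  by rewrite mulr_natr mulr2n {1}E addNr.
move/eqP; rewrite mulf_eq0 => /orP [/eqP //|].
by rewrite ((pcharf0P k).1 Hchar 2).
Qed.

Lemma tog_sum0 (k : fieldType) (Hchar : [pchar k] =i pred0) (I : finType)
  (X0 : {set I}) (D : pred (SC I)) (f : SC I -> k) :
  (forall z, D z -> D (tog X0 z)) ->
  (forall z, D z -> X0 \notin val z -> is_sc (X0 |: val z) -> f (tog X0 z) = - f z) ->
  (forall z, D z -> X0 \notin val z -> ~~ is_sc (X0 |: val z) -> f z = 0) ->
  (forall z, D z -> X0 \in val z -> ~~ is_sc (val z :\ X0) -> f z = 0) ->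
  \sum_(z | D z) f z = 0.
Proof.
move=> HD Hb Hc Hd; apply: (inv_sum0 Hchar (tog_inv X0)).
  move=> z; apply/idP/idP; last exact: HD.
  by move/HD; rewrite tog_inv.
move=> z Dz; case Xz: (X0 \in val z).
  case sc: (is_sc (val z :\ X0)); last by rewrite tog_rem_fix ?sc // (Hd z) ?sc // oppr0.
  set v := tog X0 z.
  have vE : val v = val z :\ X0 by rewrite tog_rem.
  have Xv : X0 \notin val v by rewrite vE setD11.
  have scv : is_sc (X0 |: val v) by rewrite vE setD1K // (valP z).
  have := Hb v (HD z Dz) Xv scv; rewrite /v tog_inv => ->; by rewrite opprK.
case sc: (is_sc (X0 |: val z)); first by apply: Hb; rewrite ?Xz.
by rewrite tog_add_fix ?Xz ?sc // (Hc z) ?Xz ?sc // oppr0.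
Qed.

Lemma condn_add (I : finType) (a b : {set {set I}}) (X : {set I}) :
  (forall Y : {set I}, Y \proper X -> Y \in a) -> condn a (X |: b) = condn a b.
Proof.
move=> HX; apply/condnP/condnP => H.
  by move=> X' Y Xb; apply: H; rewrite in_setU1 Xb orbT.
move=> X' Y; rewrite in_setU1 => /orP [/eqP -> _|]; first exact: HX.
exact: H.
Qed.

Lemma sum_nu_up (k : fieldType) (Hchar : [pchar k] =i pred0) (I : finType)
  (x y : SC I) : val x \subset val y -> x != y ->
  \sum_(z : SC I | (val x \subset val z) && (val z \subset val y)) nu k x z = 0.
Proof.
move=> xy nxy.
have [X1 HX1] : exists X1, X1 \in val y :\: val x.
  apply/set0Pn; rewrite setD_eq0; apply: contra nxy => yx.
  by apply/eqP/val_inj/eqP; rewrite eqEsubset xy yx.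
case: (@arg_minnP _ X1 (mem (val y :\: val x)) (fun X => #|X|) HX1).
move=> X0 HX0 Hmin.
move: HX0 => /= HX0. move: HX0; rewrite inE => /andP [X0x X0y].
have Hsub : forall Y : {set I}, Y \proper X0 -> Y \in val x.
  move=> Y YX; apply: contraTT (YX) => Yx.
  have Yy : Y \in val y := sc_down X0y (proper_sub YX).
  have /= := Hmin Y; rewrite inE Yx Yy => /(_ isT) H.
  by apply/negP => YX'; have := proper_card YX'; rewrite ltnNge H.
apply: (tog_sum0 Hchar (X0 := X0)).
- move=> z /andP [xz zy]; rewrite /tog val_insubd.
  case: (X0 \in val z); case: (is_sc _) => //=; rewrite ?xz ?zy //.
    by rewrite subsetD1 xz X0x /= (subset_trans (subsetDl _ _) zy).
  by rewrite (subset_trans xz (subsetUr _ _)) subUset sub1set X0y zy.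
- move=> z /andP [xz zy] X0z sc; rewrite /nu tog_add //.
  rewrite (subset_trans xz (subsetUr _ _)) xz /= condn_add //.
  have -> : (X0 |: val z) :\: val x = X0 |: (val z :\: val x).
    by apply/setP => W; rewrite !inE; case: eqP => // ->; rewrite X0x.
  rewrite cardsU1 inE (negbTE X0z) andbF /= add1n exprS mulN1r.
  by case: ifP; rewrite ?oppr0.
- move=> z /andP [xz zy] X0z /negP []; apply: is_scP => X Y.
  rewrite in_setU1 => /orP [/eqP -> YX|Xz YX].
    rewrite in_setU1; case: eqP => //= YX0.
    apply: (subsetP xz); apply: Hsub.
    by rewrite properEneq YX andbT; apply/eqP.
  by rewrite in_setU1 (sc_down Xz YX) orbT.
- move=> z /andP [xz zy] X0z nsc; rewrite /nu; case: ifP => // /andP [_ C].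
  exfalso; apply: (negP nsc); apply: is_scP => X Y.
  rewrite in_setD1 => /andP [XX0 Xz] YX.
  rewrite in_setD1 (sc_down Xz YX) andbT.
  apply/negP => /eqP YE; subst Y.
  have Xx : X \notin val x.
    by apply: contra X0x => Xx; exact: sc_down Xx YX.
  have := condnP _ _ C X X0 Xz Xx.
  by rewrite properEneq eq_sym XX0 YX => /(_ isT); rewrite (negbTE X0x).
Qed.

Lemma nu_refl (k : pzRingType) (I : finType) (x : SC I) : nu k x x = 1.
Proof.
rewrite /nu subxx setDv cards0 expr0 /=.
by case: condnP => // [[]] X Y Xx nXx; rewrite Xx in nXx.
Qed.

Lemma mob_nu (k : fieldType) (Hchar : [pchar k] =i pred0) (I : finType) n (x y : SC I) :
  (#|val y :\: val x| <= n)%N -> mobius_rec k (@sc_le I) n x y = nu k x y.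
Proof.
elim: n x y => [|n IH] x y Hn /=.
  case: eqP => [->|nxy]; first by rewrite nu_refl.
  rewrite /nu; case: ifP => // /andP [xy _]; exfalso; apply: nxy.
  move: Hn; rewrite leqn0 cards_eq0 setD_eq0 => yx.
  by apply: val_inj; apply/eqP; rewrite eqEsubset xy yx.
case: eqP => [->|nxy]; first by rewrite nu_refl.
rewrite /sc_le; case: ifP => xy; last by rewrite /nu xy.
have := sum_nu_up Hchar xy (introN eqP nxy).
rewrite (bigD1 y) /=; last by rewrite xy subxx.
move/eqP; rewrite addr_eq0 => /eqP ->; congr (- _).
apply: eq_big => [z|z]; first by rewrite andbAC.
move=> /andP [/andP [xz nzy] zy]; apply: IH.
have : (#|val z :\: val x| < #|val y :\: val x|)%N.
  apply: proper_card; rewrite properEneq setSD // andbT.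
  apply: contra nzy => /eqP E; apply/eqP/val_inj.
  have K (a b : {set {set I}}) : a \subset b -> a :|: (b :\: a) = b.
    by move=> ab; rewrite setDE setUIr setUCr setIT; apply/setUidPr.
  by rewrite /= -(K _ _ xz) -(K _ _ xy) E.
by move=> H; rewrite -ltnS (leq_trans H Hn).
Qed.

Lemma powerset_sc (I : finType) (X : {set I}) : is_sc (powerset X).
Proof.
apply: is_scP => Y Z; rewrite !powersetE => YX ZY; exact: subset_trans ZY YX.
Qed.

Lemma card_SC (I : finType) (x y : SC I) : (#|val y :\: val x| <= #|{: SC I}|)%N.
Proof.
apply: leq_trans (max_card _) _.
pose f (X : {set I}) : SC I := insubd x (powerset X).
have fE X : val (f X) = powerset X by rewrite /f insubdK //; apply: powerset_sc.
apply: (@leq_card _ _ f) => X Y /(congr1 val); rewrite /= !fE => E.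
have h1 : X \in powerset Y by rewrite -E powersetE.
have h2 : Y \in powerset X by rewrite E powersetE.
by apply/eqP; rewrite eqEsubset -!powersetE h1 h2.
Qed.

Lemma omega_nu (k : fieldType) (Hchar : [pchar k] =i pred0) (I : finType) (G P : SC I) :
  omega k G P = nu k P G.
Proof.
rewrite /omega ffunE /sc_mu /mobius mob_nu ?card_SC //.
by case: ifP => // H; rewrite /nu /sc_le in H *; rewrite H.
Qed.

Lemma restr_sc (I : finType) (G : {set {set I}}) (S : {set I}) :
  is_sc G -> is_sc (restr G S).
Proof.
move=> scG; apply: is_scP => X Y; rewrite !inE => /andP [XG XS] YX.
have /forall_inP H := scG.
have /forallP /(_ Y) /implyP -> := H X XG; last by [].
by rewrite (subset_trans YX XS).
Qed.

Lemma val_restr (I : finType) (G : SC I) (S : {set I}) :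
  val (insubd G (restr (val G) S)) = restr (val G) S.
Proof. by rewrite insubdK //; apply: restr_sc (valP G). Qed.

Lemma exists_facet (I : finType) (G : SC I) (S : {set I}) :
  connected G -> S != set0 -> ~: S != set0 ->
  exists F0, [/\ F0 \in val G, ~~ (F0 \subset S), ~~ (F0 \subset ~: S) &
     forall X, X \in val G -> F0 \subset X -> X = F0].
Proof.
move=> HG S0 T0.
case: (boolP [exists X in val G, ~~ (X \subset S) && ~~ (X \subset ~: S)]).
  move=> /exists_inP [X XG /andP [XS XT]].
  have PX : [pred F | (F \in val G) && (X \subset F)] X by rewrite /= XG subxx.
  case: (@arg_maxnP _ X [pred F | (F \in val G) && (X \subset F)] (fun F => #|F|) PX).
  move=> F0 /= /andP [F0G XF0] Hmax; exists F0; split => //.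
  - by apply: contra XS => F0S; exact: subset_trans XF0 F0S.
  - by apply: contra XT => F0S; exact: subset_trans XF0 F0S.
  move=> Y YG F0Y; have /= := Hmax Y; rewrite YG (subset_trans XF0 F0Y) => /(_ isT) H.
  by apply/eqP; rewrite eq_sym eqEcard F0Y H.
move/exists_inPn => H; exfalso; move: HG; rewrite /connected => /negP; apply.
apply/existsP; exists S; apply/existsP; exists (insubd G (restr (val G) S)).
apply/existsP; exists (insubd G (restr (val G) (~: S))).
rewrite !val_restr S0 T0 /=; apply/and3P; split.
- by apply/forall_inP => X; rewrite inE => /andP [].
- by apply/forall_inP => X; rewrite inE => /andP [].
apply/eqP/setP => X; rewrite !inE; case XG: (X \in val G) => //=.
by have := H X XG; rewrite negb_and !negbK.
Qed.

Lemma restr_U1 (I : finType) (G : {set {set I}}) (X S : {set I}) :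
  ~~ (X \subset S) -> restr (X |: G) S = restr G S.
Proof.
move=> XS; apply/setP => Y; rewrite !inE; case: eqP => [->|] //=.
by rewrite (negbTE XS) andbF.
Qed.

Lemma restr_D1 (I : finType) (G : {set {set I}}) (X S : {set I}) :
  ~~ (X \subset S) -> restr (G :\ X) S = restr G S.
Proof.
move=> XS; apply/setP => Y; rewrite !inE; case: eqP => [->|] //=.
by rewrite (negbTE XS) andbF.
Qed.

Lemma omega_prim (k : fieldType) (Hchar : [pchar k] =i pred0) (I : finType)
  (G : SC I) : connected G -> primitive (omega k G).
Proof.
move=> HG S S0 T0 A B.
have [F0 [F0G F0S F0T Fmax]] := exists_facet HG S0 T0.
under eq_bigr do rewrite omega_nu //.
apply: (tog_sum0 Hchar (X0 := F0)).
- move=> z /andP [zA zB]; rewrite /tog val_insubd.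
  case: (F0 \in val z); case: (is_sc _) => //=;
  by rewrite ?restr_U1 ?restr_D1 ?zA ?zB.
- move=> z _ F0z sc; rewrite /nu tog_add //.
  have C : condn (val z) (val G) = condn (F0 |: val z) (val G).
    apply/condnP/condnP => H X Y XG Xn YX.
      have Xz : X \notin val z by apply: contra Xn => Xz; rewrite in_setU1 Xz orbT.
      by rewrite in_setU1 (H X Y XG Xz YX) orbT.
    case: (eqVneq X F0) => [XF0|XF0].
      subst X.
      have /forall_inP Hs := sc.
      have := Hs F0 (setU11 _ _) => /forallP /(_ Y) /implyP /(_ (proper_sub YX)).
      rewrite in_setU1 => /orP [/eqP YF0|] //.
      by subst Y; rewrite properE subxx in YX.
    have Xn' : X \notin F0 |: val z by rewrite in_setU1 negb_or XF0.
    have := H X Y XG Xn' YX; rewrite in_setU1 => /orP [/eqP YF0|] //.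
    subst Y; by rewrite (Fmax X XG (proper_sub YX)) eqxx in XF0.
  rewrite C; case zG: (val z \subset val G); last first.
    have -> : (F0 |: val z \subset val G) = false.
      by apply: contraFF zG => H; exact: subset_trans (subsetUr _ _) H.
    by rewrite oppr0.
  have -> : (F0 |: val z \subset val G) by rewrite subUset sub1set F0G zG.
  have E : val G :\: val z = F0 |: (val G :\: (F0 |: val z)).
    apply/setP => W; rewrite !inE; case: eqP => [->|] /=; by rewrite ?F0G ?(negbTE F0z).
  rewrite E cardsU1 !inE eqxx /= add1n exprS mulN1r.
  by case: ifP; rewrite ?oppr0 ?opprK.
- move=> z _ F0z nsc; rewrite /nu; case: ifP => // /andP [zG C].
  exfalso; apply: (negP nsc); apply: is_scP => X Y.
  rewrite in_setU1 => /orP [/eqP -> YX | Xz YX].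
    rewrite in_setU1; case: eqP => //= YF0.
    apply: (condnP _ _ C F0 Y F0G F0z).
    by rewrite properEneq YX andbT; apply/eqP.
  by rewrite in_setU1 (sc_down Xz YX) orbT.
- move=> z _ F0z nsc; rewrite /nu; case: ifP => // /andP [zG C].
  exfalso; apply: (negP nsc); apply: is_scP => X Y.
  rewrite in_setD1 => /andP [XF0 Xz] YX.
  rewrite in_setD1 (sc_down Xz YX) andbT.
  apply/eqP => YE; subst Y.
  by move: XF0; rewrite (Fmax X (subsetP zG X Xz) YX) eqxx.
Qed.

Lemma indep (k : fieldType) (Hchar : [pchar k] =i pred0) (I : finType) (c : SC I -> k) :
  (forall P : SC I, \sum_(G : SC I | connected G) c G * omega k G P = 0) ->
  forall G : SC I, connected G -> c G = 0.
Proof.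
move=> H.
suff Hs : forall n (G : SC I), (#|{: {set I}}| - #|val G| < n)%N -> connected G -> c G = 0.
  by move=> G; apply: (Hs (#|{: {set I}}| - #|val G|).+1).
elim=> [//|n IH] G Hn HG.
have := H G; rewrite (bigD1 G) //= omega_nu // nu_refl mulr1 big1 ?addr0 //.
move=> G' /andP [HG' nG']; rewrite omega_nu //.
rewrite /nu; case: ifP => [/andP [GG' _]|]; last by rewrite mulr0.
rewrite IH ?mul0r //.
have h1 : (#|val G| < #|val G'|)%N.
  apply: proper_card; rewrite properEneq GG' andbT.
  by apply: contraNneq nG' => E; apply/eqP/val_inj.
have h2 : (#|val G'| <= #|{: {set I}}|)%N := max_card _.
lia.
Qed.

Lemma sum_nu_delta (k : fieldType) (Hchar : [pchar k] =i pred0) (I : finType) (P Q : SC I) :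
  \sum_(G : SC I | val G \subset val Q) nu k P G = (P == Q)%:R.
Proof.
rewrite (bigID (fun G : SC I => val P \subset val G)) /= [X in _ + X]big1 ?addr0;
  last by move=> G /andP [_ nPG]; rewrite /nu (negbTE nPG).
case: (eqVneq P Q) => [<-|nPQ].
  rewrite (big_pred1 P) ?nu_refl // => G /=.
  by rewrite andbC -eqEsubset val_eqE eq_sym.
rewrite /= ?mulr0n.
case: (boolP (val P \subset val Q)) => PQ.
  rewrite -[RHS](sum_nu_up Hchar PQ nPQ); apply: eq_bigl => G; by rewrite andbC.
by rewrite big1 // => G /andP [GQ PG]; rewrite (subset_trans PG GQ) in PQ.
Qed.

Lemma span (k : fieldType) (Hchar : [pchar k] =i pred0) (I : finType) (p : kSC k I) :
  primitive p -> exists c : SC I -> k,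
  forall P : SC I, p P = \sum_(G : SC I | connected G) c G * omega k G P.
Proof.
move=> Hp; exists (fun G : SC I => \sum_(Q : SC I | val G \subset val Q) p Q) => P.
have Hdis : forall G : SC I, ~~ connected G -> \sum_(Q : SC I | val G \subset val Q) p Q = 0.
  move=> G /negPn /existsP [S /existsP [G1 /existsP [G2 /and5P [S0 T0 G1S G2T /eqP GE]]]].
  rewrite (partition_big (fun Q : SC I => (restr (val Q) S, restr (val Q) (~: S)))
     (fun AB : {set {set I}} * {set {set I}} => (val G1 \subset AB.1) && (val G2 \subset AB.2))).
    apply: big1 => [[A B]] /= /andP [hA hB].
    rewrite -[RHS](Hp S S0 T0 A B); apply: eq_bigl => Q.
    rewrite xpair_eqE; case: eqP => [eA|]; case: eqP => [eB|]; rewrite ?andbF //= andbT.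
    have rQ (T : {set I}) : restr (val Q) T \subset val Q.
      by apply/subsetP => X; rewrite inE => /andP [].
    rewrite GE subUset (subset_trans hA) ?(subset_trans hB) //; by rewrite -?eA -?eB.
  move=> Q; rewrite GE subUset => /andP [h1 h2] /=; apply/andP; split;
  apply/subsetP => X XG; rewrite inE.
    by rewrite (subsetP h1 X XG) (forall_inP G1S X XG).
  by rewrite (subsetP h2 X XG) (forall_inP G2T X XG).
under eq_bigr do rewrite omega_nu //.
have -> : \sum_(G : SC I | connected G) (\sum_(Q : SC I | val G \subset val Q) p Q) * nu k P G
        = \sum_(G : SC I) (\sum_(Q : SC I | val G \subset val Q) p Q) * nu k P G.
  rewrite [RHS](bigID (@connected I)) /= [X in _ = _ + X]big1 ?addr0 // => G nG.
  by rewrite Hdis ?mul0r.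
under eq_bigr do rewrite big_distrl big_mkcond /=.
rewrite exchange_big /=.
under eq_bigr do rewrite -big_mkcond /= -big_distrr /= sum_nu_delta //.
rewrite (bigD1 P) //= eqxx mulr1 big1 ?addr0 // => Q nQ.
by rewrite eq_sym (negbTE nQ) mulr0.
Qed.

Theorem mainTheorem18 (k : fieldType) (Hchar : [pchar k] =i pred0)
    (I : finType) :
  (* each omega^Gamma (Gamma connected) is primitive *)
  (forall G : SC I, connected G -> primitive (omega k G)) /\
  (* the family is linearly independent *)
  (forall c : SC I -> k,
     (forall P : SC I, \sum_(G : SC I | connected G) c G * omega k G P = 0) ->
     forall G : SC I, connected G -> c G = 0) /\
  (* and spans the primitive elements *)
  (forall p : kSC k I, primitive p ->
     exists c : SC I -> k,
       forall P : SC I, p P = \sum_(G : SC I | connected G) c G * omega k G P).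
Proof.
split; first by move=> G; exact: omega_prim.
split; first exact: indep.
exact: span.
Qed.
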